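(* Let $u$ be a smooth real function on $\mathbb{R}$, let $L=\frac{\partial^2}{\partial x^2}+u(x)$, and let $G_n[u]$, $n\in\mathbb{N}$, be the KdV-hierarchy polynomials in the formal variables $u_0,u_1,u_2,\dots$, defined from the heat invariants of $L$ as described in the context. For $k\ge n\ge 1$, let $P_{kn}[u]$ be the polynomial obtained from $L^k\left[x^{2k-2n}\right]\big|_{x=0}$ (a polynomial in $u(0),u'(0),\dots,u^{(2k-2)}(0)$) by the formal change of variables $u^{(i)}(0)\to u_i$, $i=0,\dots,2k-2$. Then for every $n\in\mathbb{N}$, $$ G_n[u]=\sum_{m=n}^{2n}\sum_{k=n}^{m}\frac{(-1)^{n+k}\binom{m}{k}\binom{m}{n}\binom{2m}{m}}{2^{2m-2n+1}\binom{2m}{2n}\,(2k-2n)!}\,P_{kn}[u]. $$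
   Context: The heat kernel $H(t,x,y)$ of $L=\frac{\partial^2}{\partial x^2}+u(x)$ is the fundamental solution of the heat equation $\left(\frac{\partial}{\partial t}-L\right)f=0$. On the diagonal it has the asymptotic expansion, as $t\to 0+$, $$H(t,x,x)\sim \frac{1}{\sqrt{4\pi t}}\sum_{n=0}^{\infty} h_n[u]\,t^n,$$ where the heat invariants $h_n[u]$ are universal polynomials in $u(x)$ and its derivatives. Writing $u_i$ for the formal variable standing for $\partial^i u/\partial x^i$ (with $u_0=u$), one defines $G_n[u]=G_n[u_0,u_1,u_2,\dots]=\frac{(2n)!}{2\cdot n!}\,h_n[u]$ for $n\in\mathbb{N}$; the KdV hierarchy is $\frac{\partial u}{\partial t}=\frac{\partial}{\partial x}G_n[u]$. *)

(* Defs.v *)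
From mathcomp Require Import all_boot all_order all_algebra.
Set Implicit Arguments. Unset Strict Implicit. Unset Printing Implicit Defensive.
Import Order.TTheory GRing.Theory Num.Theory.
Local Open Scope ring_scope.

(* A "jet at a point" of a smooth function f : the sequence of its derivatives
   (f (x0), f'(x0), f''(x0), ...).  The formal variables u_i of the paper
   (standing for u^(i)) are an arbitrary sequence  u : nat -> R  in a field R
   of characteristic 0 (a numFieldType); an identity holding for every such
   R and every u is exactly an identity of polynomials in Q[u_0,u_1,...]. *)

Section KdV.
Variable R : numFieldType.

(* L = d^2/dx^2 + u acting on jets at 0 (Leibniz rule):
   (L f)^(j)(0) = f^(j+2)(0) + sum_{i<=j} C(j,i) u^(i)(0) f^(j-i)(0). *)
Definition Ljet (u : nat -> R) (f : nat -> R) : nat -> R :=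
  fun j => f j.+2 + \sum_(i < j.+1) ('C(j, i))%:R * u i * f (j - i)%N.

Definition xpow_jet (m : nat) : nat -> R :=
  fun j => if j == m then (m`!)%:R else 0.

Definition Pkn (u : nat -> R) (k n : nat) : R :=
  iter k (Ljet u) (xpow_jet (2 * k - 2 * n)) 0%N.

(* Hadamard / Minakshisundaram coefficients of the heat kernel:
   H(t,x,y) ~ (4 pi t)^(-1/2) e^{-(x-y)^2/4t} sum_n a_n(x,y) t^n with
   a_0 = 1,  (x-y) d_x a_n + n a_n = L_x a_(n-1).
   hadamard u n j = j-th Taylor coefficient of a_n(., y) in powers of (x-y),
   where u^(i)(y) = u i.  The recursion is the transport equation read
   coefficientwise:
   (n+j) c_{n,j} = (j+2)(j+1) c_{n-1,j+2} + sum_{i<=j} u_i/i! c_{n-1,j-i}. *)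
Fixpoint hadamard (u : nat -> R) (n : nat) : nat -> R :=
  match n with
  | 0 => fun j => if j == 0%N then 1 else 0
  | n'.+1 =>
      let c := hadamard u n' in
      fun j => (((j.+2 * j.+1)%N)%:R * c j.+2
                + \sum_(i < j.+1) u i / (i`!)%:R * c (j - i)%N)
               / ((n'.+1 + j)%N)%:R
  end.

Definition heat_invariant (u : nat -> R) (n : nat) : R := hadamard u n 0%N.

Definition Gn (u : nat -> R) (n : nat) : R :=
  ((2 * n)`!)%:R / (2 * (n`!)%:R) * heat_invariant u n.

End KdV.

(* Main.v *)
Require Import Defs.
From mathcomp Require Import all_boot all_order all_algebra.
From mathcomp Require Import ring lra zify.
From Stdlib Require Import Lia.
Set Implicit Arguments. Unset Strict Implicit. Unset Printing Implicit Defensive.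
Import Order.TTheory GRing.Theory Num.Theory.
Local Open Scope ring_scope.

Section Comb.
Variable R : numFieldType.

Definition poch (x : R) (l : nat) : R := \prod_(i < l) (x + i%:R).

Lemma poch0 x : poch x 0 = 1.
Proof. by rewrite /poch big_ord0. Qed.

Lemma pochSr x l : poch x l.+1 = poch x l * (x + l%:R).
Proof. by rewrite /poch big_ord_recr. Qed.

Lemma pochSl x l : poch x l.+1 = x * poch (x + 1) l.
Proof.
rewrite /poch big_ord_recl /= addr0; congr (_ * _).
by apply: eq_bigr => i _; rewrite /bump /= -natr1; ring. 
Qed.

Lemma pochD x b c : poch x (b + c) = poch x b * poch (x + b%:R) c.
Proof.
elim: c => [|c IH]; first by rewrite addn0 poch0 mulr1.
by rewrite addnS !pochSr IH natrD; ring.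
Qed.

Lemma poch_diff x l : poch (x + 1) l.+1 - poch x l.+1 = l.+1%:R * poch (x + 1) l.
Proof. rewrite pochSr pochSl -natr1; ring. Qed.

Lemma fact_neq0 n : (n`!)%:R != 0 :> R.
Proof. by rewrite pnatr_eq0 -lt0n fact_gt0. Qed.

Lemma pochF a l :
  (a`!)%:R * (((2 * (a + l))`!)%:R) / (((2 * a)`!)%:R * ((a + l)`!)%:R)
  = 4 ^+ l * poch (a%:R + 2^-1) l :> R.
Proof.
have h2 : (2 : R) != 0 by rewrite pnatr_eq0.
elim: l => [|l IH].
  rewrite addn0 poch0 expr0 mulr1; field.
  by rewrite fact_neq0 fact_neq0.
rewrite pochSr exprS.
have -> : forall A B C D : R, (A * B) * (C * D) = (B * C) * (A * D) by move=> *; ring.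
rewrite -IH.
have -> : (2 * (a + l.+1))%N = (2 * (a + l)).+2 by rewrite addnS mulnS add2n.
rewrite addnS !factS !natrM; field.
rewrite !fact_neq0 /=.
by rewrite -natrD addrC natr1 pnatr_eq0.
Qed.

Lemma natS_neq0 n : (n.+1)%:R != 0 :> R.
Proof. by rewrite pnatr_eq0. Qed.
Lemma oneD_neq0 n : 1 + n%:R != 0 :> R.
Proof. by rewrite addrC natr1 pnatr_eq0. Qed.
Lemma four_neq0 : (4 : R) != 0.
Proof. by rewrite pnatr_eq0. Qed.
Lemma two_neq0 : (2 : R) != 0.
Proof. by rewrite pnatr_eq0. Qed.

Lemma centralF b :
  ((2 * b)`!)%:R / ((b`!)%:R * (b`!)%:R * 4 ^+ b) = poch (2^-1) b / (b`!)%:R :> R.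
Proof.
have h2 := two_neq0.
elim: b => [|b IH].
  by rewrite muln0 poch0 expr0 /= !mulr1 div1r.
have IH' : poch (2^-1) b = ((2 * b)`!)%:R / ((b`!)%:R * (b`!)%:R * 4 ^+ b) * (b`!)%:R.
  by rewrite IH mulfVK // fact_neq0.
have -> : (2 * b.+1)%N = (2 * b).+2 by rewrite mulnS add2n.
rewrite pochSr !factS !natrM exprS IH'; field.
by rewrite ?fact_neq0 oneD_neq0 expf_neq0 ?four_neq0.
Qed.

Definition Sg (b l : nat) (s : R) : R :=
  \sum_(a < b.+1) (-1) ^+ a * ('C(b, a))%:R * poch (a%:R + s) l.

Lemma pascal_sum (f : nat -> R) b :
  \sum_(a < b.+2) (-1) ^+ a * ('C(b.+1, a))%:R * f a =
  \sum_(a < b.+1) (-1) ^+ a * ('C(b, a))%:R * f a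
  - \sum_(a < b.+1) (-1) ^+ a * ('C(b, a))%:R * f a.+1.
Proof.
have E : \sum_(a < b.+1) (-1) ^+ a * ('C(b, a))%:R * f a =
  \sum_(a < b.+2) (-1) ^+ a * ('C(b, a))%:R * f a.
  by rewrite [RHS]big_ord_recr /= bin_small // mulr0 mul0r addr0.
rewrite E big_ord_recl [in RHS]big_ord_recl /= !bin0.
rewrite -addrA; congr (_ + _).
rewrite -sumrB; apply: eq_bigr => i _.
rewrite /bump /= binS natrD exprS; ring.
Qed.

Lemma Sg_rec b l s : Sg b.+1 l s = Sg b l s - Sg b l (s + 1).
Proof.
rewrite /Sg (pascal_sum (fun a => poch (a%:R + s) l)); congr (_ - _); apply: eq_bigr => i _.
by rewrite -natr1 -addrA [1 + s]addrC.
Qed.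

Lemma Sg0 b s t : Sg b 0 s = Sg b 0 t.
Proof. by rewrite /Sg; apply: eq_bigr => i _; rewrite !poch0. Qed.

Lemma Sg_diff b l s : Sg b l.+1 (s + 1) - Sg b l.+1 s = l.+1%:R * Sg b l (s + 1).
Proof.
rewrite /Sg -sumrB mulr_sumr; apply: eq_bigr => i _.
rewrite -mulrBr addrA poch_diff; ring.
Qed.

Lemma Sg_closed b : forall l s, Sg b l s =
  if (b <= l)%N then (-1) ^+ b * (l`!)%:R / ((l - b)`!)%:R * poch (s + b%:R) (l - b)
  else 0.
Proof.
elim: b => [|b IH] l s.
  by rewrite /Sg big_ord1 /= subn0 !expr0 bin0 addr0 add0r mul1r mulfK ?fact_neq0.
rewrite Sg_rec; case: l => [|l].
  by rewrite (Sg0 b (s + 1) s) subrr.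
rewrite -opprB Sg_diff IH ltnS subSS.
case: (b <= l)%N; last by rewrite mulr0 oppr0.
rewrite factS natrM exprS -!natr1.
have -> : s + 1 + b%:R = s + (b%:R + 1) by ring.
ring.
Qed.

Lemma sum_widen0 (F : nat -> R) m k : (m <= k)%N ->
  (forall i, (m <= i)%N -> (i < k)%N -> F i = 0) -> \sum_(i < k) F i = \sum_(i < m) F i.
Proof.
move=> mk HF; rewrite (big_ord_widen k F mk) [RHS]big_mkcond /=.
apply: eq_bigr => i _; case: ifP => // /negbT; rewrite -leqNgt => /HF -> //.
Qed.

Lemma binR l b : (b <= l)%N ->
  ('C(l, b))%:R = (l`!)%:R / ((b`!)%:R * ((l - b)`!)%:R) :> R.
Proof.
move=> bl; by rewrite -(bin_fact bl) !natrM mulfK // mulf_neq0 ?fact_neq0.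
Qed.

Lemma comb_core n l : (l <= n)%N ->
  \sum_(b < n.+1) poch (2^-1) b / (b`!)%:R * Sg b l (2^-1) = (l == 0%N)%:R.
Proof.
move=> ln.
have E : forall b : nat, poch (2^-1) b / (b`!)%:R * Sg b l (2^-1) =
    poch (2^-1) l * ((-1) ^+ b * 1 ^+ (l - b) * 1 ^+ b *+ 'C(l, b)).
  move=> b; rewrite Sg_closed !expr1n !mulr1.
  case: (leqP b l) => [bl|lb]; last by rewrite bin_small // mulr0n mulr0 mulr0.
  rewrite -[_ *+ 'C(_, _)]mulr_natr binR //.
  have -> : poch (2^-1) l = poch (2^-1) b * poch (2^-1 + b%:R) (l - b) by rewrite -pochD subnKC.
  field.
  by rewrite !fact_neq0.
under eq_bigr => b _ do rewrite E.
rewrite -mulr_sumr.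
rewrite (@sum_widen0 (fun b => (-1) ^+ b * 1 ^+ (l - b) * 1 ^+ b *+ 'C(l, b)) l.+1).
- rewrite -exprBn subrr expr0n; case: l {ln E} => [|l] /=; by rewrite ?poch0 ?mulr1 ?mulr0.
- by [].
- by move=> i li _; rewrite bin_small // mulr0n.
Qed.

Definition coefT (n m k : nat) : R :=
  (-1) ^+ (n + k) * ('C(m, k))%:R * ('C(m, n))%:R * ('C(2 * m, m))%:R
     / (2 ^+ (2 * m - 2 * n + 1) * ('C(2 * m, 2 * n))%:R * ((2 * k - 2 * n)`!)%:R).

Lemma term_eq n l a b : (l <= n)%N -> (a <= b)%N ->
  coefT n (n + b) (n + a) * (((n + a)`!)%:R *
     (((2 * (n + a - (n - l)))`!)%:R / ((n + a - (n - l))`!)%:R))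
  = ((2 * n)`!)%:R / (2 * (n`!)%:R) * (((2 * b)`!)%:R / ((b`!)%:R * (b`!)%:R * 4 ^+ b))
    * ((-1) ^+ a * ('C(b, a))%:R)
    * ((a`!)%:R * ((2 * (a + l))`!)%:R / (((2 * a)`!)%:R * ((a + l)`!)%:R)).
Proof.
move=> ln ab; rewrite /coefT.
have -> : (n + a - (n - l) = a + l)%N by lia.
have -> : (2 * (n + b) - 2 * n = 2 * b)%N by lia.
have -> : (2 * (n + a) - 2 * n = 2 * a)%N by lia.
have e1 : ('C(n + b, n + a))%:R = ((n + b)`!)%:R / (((n + a)`!)%:R * ((b - a)`!)%:R) :> R.
  by rewrite binR ?leq_add2l // subnDl.
have e2 : ('C(n + b, n))%:R = ((n + b)`!)%:R / ((n`!)%:R * (b`!)%:R) :> R.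
  by rewrite binR ?leq_addr // addKn.
have e3 : ('C(2 * (n + b), n + b))%:R = ((2 * (n + b))`!)%:R / (((n + b)`!)%:R * ((n + b)`!)%:R) :> R.
  by rewrite binR; [congr (_ / (_ * _)); congr (_`!)%:R; lia | lia].
have e4 : ('C(2 * (n + b), 2 * n))%:R = ((2 * (n + b))`!)%:R / (((2 * n)`!)%:R * ((2 * b)`!)%:R) :> R.
  by rewrite binR; [congr (_ / (_ * _)); congr (_`!)%:R; lia | lia].
have e5 : ('C(b, a))%:R = (b`!)%:R / ((a`!)%:R * ((b - a)`!)%:R) :> R by rewrite binR.
have e6 : (-1) ^+ (n + (n + a)) = (-1) ^+ a :> R.
  by rewrite addnA addnn -mul2n exprD exprM sqrrN !expr1n mul1r.
have e7 : 2 ^+ (2 * b + 1) = 2 * 4 ^+ b :> R.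
  by rewrite addn1 exprS exprM -[2 ^+ 2]/(2 * 2); congr (_ * _ ^+ _); ring.
rewrite e1 e2 e3 e4 e5 e6 e7; field.
by rewrite !fact_neq0 expf_neq0 ?four_neq0 ?two_neq0.
Qed.

Lemma sum_shift (F : nat -> R) a c :
  \sum_(a <= i < (a + c)%N) F i = \sum_(i < c) F (a + i)%N.
Proof.
elim: c => [|c IH]; first by rewrite addn0 big_geq // big_ord0.
by rewrite addnS big_nat_recr ?leq_addr // IH big_ord_recr.
Qed.

Lemma comb_main' n l : (l <= n)%N ->
  \sum_(n <= m < (2 * n).+1) \sum_(n <= k < m.+1)
     coefT n m k * ((k`!)%:R * (((2 * (k - (n - l)))`!)%:R / ((k - (n - l))`!)%:R))
  = ((2 * n)`!)%:R / (2 * (n`!)%:R) * 4 ^+ l * (l == 0%N)%:R.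
Proof.
move=> ln.
have -> : ((2 * n).+1 = n + n.+1)%N by lia.
rewrite sum_shift -(comb_core ln) mulr_sumr; apply: eq_bigr => b _.
rewrite -addnS sum_shift.
under eq_bigr => a _ do rewrite (term_eq ln (ltn_ord a : (a <= b)%N)) pochF centralF.
rewrite /Sg !mulr_sumr; apply: eq_bigr => a _; ring.
Qed.

Lemma comb_main n n' : (n' <= n)%N ->
  \sum_(n <= m < (2 * n).+1) \sum_(n <= k < m.+1)
     coefT n m k * ((k`!)%:R * (((2 * (k - n'))`!)%:R / ((k - n')`!)%:R))
  = if n' == n then ((2 * n)`!)%:R / (2 * (n`!)%:R) else 0.
Proof.
move=> h.
have en : n' = (n - (n - n'))%N by rewrite subKn.
rewrite [in LHS]en comb_main' ?leq_subr //.
case: (eqVneq n' n) => [->|ne]; first by rewrite subnn expr0 /= !mulr1.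
have -> : (n - n' == 0)%N = false by apply/negbTE; rewrite subn_eq0 -ltnNge ltn_neqAle ne h.
by rewrite mulr0.
Qed.
End Comb.

Section PolyPart.
Variable R : numFieldType.
Variable u : nat -> R.
Variable N : nat.

Definition Upoly : {poly R} := \poly_(i < N) (u i / (i`!)%:R).
Definition Lop (p : {poly R}) : {poly R} := p^`()^`() + Upoly * p.

Fixpoint cc (n : nat) : {poly R} :=
  match n with
  | 0 => 1
  | n'.+1 => \poly_(j < size (Lop (cc n'))) ((Lop (cc n'))`_j / (n'.+1 + j)%:R)
  end.
Arguments cc : simpl never.

Lemma coef_Lop p j : (Lop p)`_j =
  p`_j.+2 * ((j.+2 * j.+1)%N)%:R + \sum_(i < j.+1) Upoly`_i * p`_(j - i).
Proof. by rewrite coefD coefM !coef_deriv -mulrnA mulr_natr. Qed.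

Lemma coef_cc n j : (cc n.+1)`_j = (Lop (cc n))`_j / (n.+1 + j)%:R.
Proof.
rewrite /= coef_poly; case: ifP => // /negbT; rewrite -leqNgt => h.
by rewrite nth_default // mul0r.
Qed.

Lemma coefU i : (i < N)%N -> Upoly`_i = u i / (i`!)%:R.
Proof. by move=> h; rewrite coef_poly h. Qed.

Lemma had_cc n : forall j, (j + 2 * n <= N)%N -> hadamard u n j = (cc n)`_j.
Proof.
elim: n => [|n IH] j hj.
  by rewrite /= coef1; case: (j == 0%N).
rewrite coef_cc coef_Lop /=; congr (_ / _).
rewrite IH; last by lia.
rewrite mulrC; congr (_ + _); apply: eq_bigr => i _.
rewrite IH; last by lia.
rewrite coefU //; have := ltn_ord i; lia.
Qed.

Lemma transport n : Lop (cc n) = cc n.+1 *+ n.+1 + 'X * (cc n.+1)^`().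
Proof.
apply/polyP => j; rewrite [in RHS]coefD coefMn coefXM.
case: j => [|j] /=.
  by rewrite addr0 coef_cc addn0 -[_ *+ n.+1]mulr_natr divfK // pnatr_eq0.
rewrite coef_deriv -mulrnDr coef_cc -[_ *+ (n.+1 + j.+1)]mulr_natr divfK // pnatr_eq0 //.
Qed.

Lemma jet_iter k (f : nat -> R) (p : {poly R}) :
  (forall j, f j = p`_j * (j`!)%:R) ->
  forall j, (j + 2 * k <= N)%N -> iter k (Ljet u) f j = (iter k Lop p)`_j * (j`!)%:R.
Proof.
move=> hf; elim: k => [|k IH] j hj; first by rewrite /= hf.
rewrite /= {1}/Ljet coef_Lop IH; last by lia.
rewrite mulrDl mulr_suml; congr (_ + _).
  by rewrite !factS !natrM; ring.
apply: eq_bigr => i _.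
have hi : (i <= j)%N by have := ltn_ord i; lia.
rewrite IH; last by lia.
rewrite coefU; last by lia.
rewrite binR //; field.
by rewrite !fact_neq0.
Qed.


Definition w (m : nat) (g : {poly R}) : R := g`_(2 * m) * ((2 * m)`!)%:R / (m`!)%:R.

Lemma wD m f g : w m (f + g) = w m f + w m g.
Proof. by rewrite /w coefD !mulrDl. Qed.
Lemma wN m f : w m (- f) = - w m f.
Proof. by rewrite /w coefN !mulNr. Qed.
Lemma wMn m f k : w m (f *+ k) = w m f *+ k.
Proof. by rewrite /w coefMn !mulrnAl. Qed.

Lemma w_dd m g : w m g^`()^`() = w m.+1 g *+ m.+1.
Proof.
rewrite /w !coef_deriv -mulrnA.
have -> : (2 * m.+1 = (2 * m).+2)%N by lia.
rewrite -[g`_ _ *+ _]mulr_natr -[_ *+ m.+1]mulr_natr !factS !natrM; field.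
by rewrite ?fact_neq0 ?oneD_neq0.
Qed.

Lemma w_X m g : w m.+1 ('X * g) = w m g^`() *+ 2.
Proof.
rewrite /w coefXM coef_deriv.
have -> : (2 * m.+1 = (2 * m).+2)%N by lia.
rewrite /= -[g`_ _ *+ _]mulr_natr -[_ *+ 2]mulr_natr !factS !natrM; field.
by rewrite ?fact_neq0 ?oneD_neq0.
Qed.

Lemma w0X g : w 0 ('X * g) = 0.
Proof. by rewrite /w coefXM /= !mul0r. Qed.

Lemma polyid (c p : {poly R}) :
  c * Lop p = (c * p)^`()^`() - (c^`() * p)^`() *+ 2 + Lop c * p.
Proof. rewrite /Lop !derivM derivD !derivM; ring. Qed.

Lemma term_step K n p : (n <= K)%N ->
  w (K - n) (cc n * Lop p) =
  w (K.+1 - n) (cc n * p) *+ (K.+1 - n) - w (K - n) ((cc n)^`() * p)^`() *+ 2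
  + w (K.+1 - n.+1) (cc n.+1 * p) *+ n.+1 + w (K - n) ('X * ((cc n.+1)^`() * p)).
Proof.
move=> nK.
by rewrite polyid transport mulrDl mulrnAl -mulrA !wD wN !wMn w_dd subSS subSn // !addrA.
Qed.

Lemma cc0 : cc 0 = 1.
Proof. by []. Qed.

Lemma w0 m : w m 0 = 0.
Proof. by rewrite /w coef0 !mul0r. Qed.

Lemma sum_step K p :
  \sum_(n < K.+1) w (K - n) (cc n * Lop p) =
  (K.+1)%:R * \sum_(n < K.+2) w (K.+1 - n) (cc n * p).
Proof.
pose A n := w (K.+1 - n) (cc n * p).
pose B n := w (K - n) ((cc n)^`() * p)^`().
pose X n := w (K - n) ('X * ((cc n.+1)^`() * p)).
have E : forall n : 'I_K.+1, w (K - n) (cc n * Lop p) =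
    A n *+ (K.+1 - n) - B n *+ 2 + A n.+1 *+ n.+1 + X n.
  move=> n; rewrite term_step //; have := ltn_ord n; lia.
rewrite (eq_bigr _ (fun n _ => E n)) !big_split /= sumrN.
have HX : \sum_(n < K.+1) X n = \sum_(n < K) B n.+1 *+ 2.
  rewrite big_ord_recr /= /X subnn w0X addr0; apply: eq_bigr => n _.
  have -> : (K - n = (K - n.+1).+1)%N by have := ltn_ord n; lia.
  by rewrite w_X.
have HB : \sum_(n < K.+1) B n *+ 2 = \sum_(n < K) B n.+1 *+ 2.
  rewrite big_ord_recl /= /B cc0 -polyC1 derivC mul0r deriv0 w0 mul0rn add0r.
  by [].
rewrite HX HB.
have -> : forall a b c : R, a - b + c + b = a + c by move=> *; ring.
rewrite mulr_sumr.
have E2 : forall n : 'I_K.+2, K.+1%:R * A n = A n *+ (K.+1 - n) + A n *+ n.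
  move=> n; rewrite -mulrnDr subnK ?mulr_natl //; have := ltn_ord n; lia.
rewrite (eq_bigr _ (fun n _ => E2 n)) big_split /=.
rewrite [X in _ = X + _]big_ord_recr /= subnn mulr0n addr0 [X in _ = _ + X]big_ord_recl /= mulr0n add0r.
by [].
Qed.

Lemma moment K : forall p,
  (iter K Lop p)`_0 = (K`!)%:R * \sum_(n < K.+1) w (K - n) (cc n * p).
Proof.
elim: K => [|K IH] p.
  by rewrite big_ord1 /= cc0 mul1r /w muln0 /= mulr1 mul1r divr1.
rewrite iterSr IH sum_step factS natrM; ring.
Qed.

Lemma Pkn_cc k n : (2 * k <= N)%N ->
  Pkn u k n = (k`!)%:R * \sum_(n' < k.+1) w (k - n') (cc n' * 'X^(2 * k - 2 * n)).
Proof.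
move=> hk; rewrite /Pkn (@jet_iter k _ ('X^(2 * k - 2 * n))) ?add0n //.
  by rewrite moment /= mulr1 mulrC.
by move=> j; rewrite /xpow_jet coefXn; case: eqP => [->|]; rewrite ?mul1r ?mul0r.
Qed.

Lemma w_Xn k n n' : (n <= k)%N -> (n' <= k)%N ->
  w (k - n') (cc n' * 'X^(2 * k - 2 * n)) =
  if (n' <= n)%N then (cc n')`_(2 * (n - n')) * (((2 * (k - n'))`!)%:R / ((k - n')`!)%:R)
  else 0.
Proof.
move=> nk n'k; rewrite /w coefMXn.
case: (leqP n' n) => h.
  have -> : (2 * (k - n') < 2 * k - 2 * n)%N = false by lia.
  have -> : (2 * (k - n') - (2 * k - 2 * n) = 2 * (n - n'))%N by lia.
  by rewrite mulrA.
have -> : (2 * (k - n') < 2 * k - 2 * n)%N = true by lia.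
by rewrite !mul0r.
Qed.

Lemma Pkn_sum k n : (n <= k)%N -> (2 * k <= N)%N ->
  Pkn u k n = (k`!)%:R * \sum_(n' < n.+1)
    (cc n')`_(2 * (n - n')) * (((2 * (k - n'))`!)%:R / ((k - n')`!)%:R).
Proof.
move=> nk hk; rewrite Pkn_cc //; congr (_ * _).
rewrite (@sum_widen0 _ (fun n' => w (k - n') (cc n' * 'X^(2 * k - 2 * n))) n.+1 k.+1) //.
- apply: eq_bigr => i _; rewrite w_Xn //; last by have := ltn_ord i; lia.
  by rewrite -ltnS ltn_ord.
- by move=> i hi hik; rewrite w_Xn; [rewrite leqNgt hi | lia | lia].
Qed.
End PolyPart.

Theorem theorem1p1 (R : numFieldType) (u : nat -> R) (n : nat) (hn : (1 <= n)%N) :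
  Gn u n =
  \sum_(n <= m < (2 * n).+1) \sum_(n <= k < m.+1)
    ((-1) ^+ (n + k) * ('C(m, k))%:R * ('C(m, n))%:R * ('C(2 * m, m))%:R
     / (2 ^+ (2 * m - 2 * n + 1) * ('C(2 * m, 2 * n))%:R * ((2 * k - 2 * n)`!)%:R))
    * Pkn u k n.
Proof.
pose x n' := (cc u (4 * n) n')`_(2 * (n - n')).
have E : forall m k, (n <= m < (2 * n).+1)%N -> (n <= k < m.+1)%N ->
  ((-1) ^+ (n + k) * ('C(m, k))%:R * ('C(m, n))%:R * ('C(2 * m, m))%:R
     / (2 ^+ (2 * m - 2 * n + 1) * ('C(2 * m, 2 * n))%:R * ((2 * k - 2 * n)`!)%:R))
    * Pkn u k n =
  \sum_(n' < n.+1) x n' * (coefT R n m k *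
     ((k`!)%:R * (((2 * (k - n'))`!)%:R / ((k - n')`!)%:R))).
  move=> m k hm hk.
  rewrite (@Pkn_sum R u (4 * n)); [|lia|lia].
  rewrite !mulr_sumr; apply: eq_bigr => n' _; rewrite /x /coefT; ring.
transitivity (\sum_(n <= m < (2 * n).+1) \sum_(n <= k < m.+1) \sum_(n' < n.+1)
   x n' * (coefT R n m k * ((k`!)%:R * (((2 * (k - n'))`!)%:R / ((k - n')`!)%:R)))); last first.
  by apply: eq_big_nat => m hm; apply: eq_big_nat => k hk; rewrite E.
under eq_bigr => m _ do rewrite exchange_big.
rewrite exchange_big.
under eq_bigr => n' _ do under eq_bigr => m _ do rewrite -mulr_sumr.
under eq_bigr => n' _ do rewrite -mulr_sumr comb_main ?(leq_ord n') //.
rewrite big_ord_recr /= eqxx big1 ?add0r.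
  rewrite /Gn /heat_invariant (@had_cc R u (4 * n)); last by lia.
  by rewrite /x subnn muln0 mulrC.
move=> i _; have := ltn_ord i; rewrite /= => hi.
have -> : (i == n :> nat) = false by apply/negbTE; rewrite neq_ltn hi.
by rewrite mulr0.
Qed.
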